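(* Let $\odot$ be a pseudo-multiplication and let $\nu,\tau$ be $\sigma$-maxitive measures on a $\sigma$-algebra $\mathcal{B}$ on a nonempty set $E$. Assume that $\nu$ is semi-$\odot$-finite and that $\nu$ admits a density $c$ with respect to $\tau$. Then $\nu$ admits a density with respect to $\tau$ taking only $\odot$-finite values.
   Context: Write $\overline{\mathbb{R}}_+=[0,\infty]$ and $\oplus$ for the supremum. A pseudo-multiplication is a binary operation $\odot$ on $\overline{\mathbb{R}}_+$ with the following properties: - it is associative; - it is continuous on $(0,\infty)\times[0,\infty]$; - for every $t$, the map $s\mapsto s\odot t$ is continuous on $(0,\infty]$; - it is nondecreasing in each argument; - it has a left identity $1_\odot$, i.e. $1_\odot\odot t=t$ for all $t$; - it has no zero divisors, i.e. $s\odot t=0$ implies $s=0$ or $t=0$; - $0\odot t=t\odot 0=0$ for all $t$. Put $O(t)=\inf_{s>0}s\odot t$. An element $t$ is $\odot$-finite if $O(t)=0$, and $\odot$-infinite otherwise. A $\sigma$-maxitive measure on $\mathcal{B}$ is a map $\nu:\mathcal{B}\to\overline{\mathbb{R}}_+$ with $\nu(\emptyset)=0$ and $\nu(\bigcup_{j\in J}B_j)=\sup_{j\in J}\nu(B_j)$ for every countable family $(B_j)$ in $\mathcal{B}$. A map $f:E\to\overline{\mathbb{R}}_+$ is $\mathcal{B}$-measurable if $\{f>t\}\in\mathcal{B}$ for all $t\in[0,\infty)$. The idempotent $\odot$-integral is $\int^\infty_B f\odot d\tau=\sup_{t\in[0,\infty)}t\odot\tau(B\cap\{f>t\})$. $\nu$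 has a density with respect to $\tau$ if there is a $\mathcal{B}$-measurable $c:E\to\overline{\mathbb{R}}_+$ with $\nu(B)=\int^\infty_B c\odot d\tau$ for all $B\in\mathcal{B}$. $\nu$ is semi-$\odot$-finite if, for all $B\in\mathcal{B}$, $\nu(B)=\sup\{\nu(A):A\in\mathcal{B},\,A\subset B,\,\nu(A)\text{ is }\odot\text{-finite}\}$. *)

(* Defs.v *)
From Stdlib Require Import Reals.
Open Scope R_scope.

Inductive ER : Type := Fin (r : R) | PInf.

Definition ER_le (x y : ER) : Prop :=
  match x, y with
  | Fin a, Fin b => a <= b
  | _, PInf => True
  | PInf, Fin _ => False
  end.

Definition ER_lt (x y : ER) : Prop :=
  match x, y with
  | Fin a, Fin b => a < b
  | Fin _, PInf => True
  | PInf, _ => False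
  end.

Definition Rp : Type := { x : ER | ER_le (Fin 0) x }.

Definition Rp_le (x y : Rp) : Prop := ER_le (proj1_sig x) (proj1_sig y).
Definition Rp_lt (x y : Rp) : Prop := ER_lt (proj1_sig x) (proj1_sig y).

Definition Rp0 : Rp := exist _ (Fin 0) (Rle_refl 0).

Definition Rp_finite (x : Rp) : Prop := exists r : R, proj1_sig x = Fin r.

Definition is_sup (S : Rp -> Prop) (m : Rp) : Prop :=
  (forall y, S y -> Rp_le y m) /\
  (forall z, (forall y, S y -> Rp_le y z) -> Rp_le m z).

Definition is_inf (S : Rp -> Prop) (m : Rp) : Prop :=
  (forall y, S y -> Rp_le m y) /\
  (forall z, (forall y, S y -> Rp_le z y) -> Rp_le z m).

Definition nbhd (x : Rp) (P : Rp -> Prop) : Prop :=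
  match proj1_sig x with
  | Fin r => exists eps : R, 0 < eps /\
      forall y : Rp, (match proj1_sig y with
                      | Fin r' => Rabs (r' - r) < eps
                      | PInf => False end) -> P y
  | PInf => exists M : R, forall y : Rp, ER_lt (Fin M) (proj1_sig y) -> P y
  end.

Definition continuous2_at (f : Rp -> Rp -> Rp) (s t : Rp) : Prop :=
  forall P, nbhd (f s t) P ->
    exists U W, nbhd s U /\ nbhd t W /\
      forall s' t', U s' -> W t' -> P (f s' t').

Definition continuous_at (g : Rp -> Rp) (s : Rp) : Prop :=
  forall P, nbhd (g s) P -> nbhd s (fun s' => P (g s')).

Definition pseudo_mult (odot : Rp -> Rp -> Rp) : Prop :=
  (forall a b c, odot (odot a b) c = odot a (odot b c)) /\
  (* continuous on (0,∞) × [0,∞] (an open subset of [0,∞]²) *)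
  (forall s t, Rp_lt Rp0 s -> Rp_finite s -> continuous2_at odot s t) /\
  (* for every t, s ↦ s ⊙ t continuous on (0,∞] (open in [0,∞]) *)
  (forall t s, Rp_lt Rp0 s -> continuous_at (fun s' => odot s' t) s) /\
  (forall s s' t, Rp_le s s' -> Rp_le (odot s t) (odot s' t)) /\
  (forall s t t', Rp_le t t' -> Rp_le (odot s t) (odot s t')) /\
  (exists one : Rp, forall t, odot one t = t) /\
  (forall s t, odot s t = Rp0 -> s = Rp0 \/ t = Rp0) /\
  (forall t, odot Rp0 t = Rp0 /\ odot t Rp0 = Rp0).

Definition odot_finite (odot : Rp -> Rp -> Rp) (t : Rp) : Prop :=
  is_inf (fun y => exists s : Rp, Rp_lt Rp0 s /\ y = odot s t) Rp0.

Definition sigma_algebra {E : Type} (B : (E -> Prop) -> Prop) : Prop :=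
  B (fun _ => True) /\
  (forall A, B A -> B (fun x => ~ A x)) /\
  (forall A : nat -> E -> Prop, (forall n, B (A n)) ->
     B (fun x => exists n, A n x)).

Definition countable (J : Type) : Prop :=
  exists f : J -> nat, forall i j, f i = f j -> i = j.

Definition sigma_maxitive {E : Type} (B : (E -> Prop) -> Prop)
  (nu : (E -> Prop) -> Rp) : Prop :=
  nu (fun _ => False) = Rp0 /\
  forall (J : Type) (Bj : J -> E -> Prop), countable J ->
    (forall j, B (Bj j)) ->
    is_sup (fun y => exists j, y = nu (Bj j)) (nu (fun x => exists j, Bj j x)).

Definition measurable {E : Type} (B : (E -> Prop) -> Prop) (f : E -> Rp) : Prop :=
  forall t : Rp, Rp_finite t -> B (fun x => Rp_lt t (f x)).

(** ∫^∞_A f ⊙ dτ is the sup of this set *)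
Definition integrand_set {E : Type} (odot : Rp -> Rp -> Rp)
  (tau : (E -> Prop) -> Rp) (f : E -> Rp) (A : E -> Prop) : Rp -> Prop :=
  fun y => exists t : Rp, Rp_finite t /\
    y = odot t (tau (fun x => A x /\ Rp_lt t (f x))).

Definition is_density {E : Type} (B : (E -> Prop) -> Prop) (odot : Rp -> Rp -> Rp)
  (nu tau : (E -> Prop) -> Rp) (c : E -> Rp) : Prop :=
  measurable B c /\
  forall A, B A -> is_sup (integrand_set odot tau c A) (nu A).

Definition semi_odot_finite {E : Type} (B : (E -> Prop) -> Prop)
  (odot : Rp -> Rp -> Rp) (nu : (E -> Prop) -> Rp) : Prop :=
  forall A, B A ->
    is_sup (fun y => exists A', B A' /\ (forall x, A' x -> A x) /\
                         odot_finite odot (nu A') /\ y = nu A') (nu A).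

(* Main.v *)
Require Import Defs.
From Stdlib Require Import Reals Lra Lia Classical ClassicalEpsilon FunctionalExtensionality PropExtensionality ProofIrrelevance.
Open Scope R_scope.

Lemma Rp_eq (x y : Rp) : proj1_sig x = proj1_sig y -> x = y.
Proof. destruct x as [x hx], y as [y hy]; simpl; intros ->; f_equal; apply proof_irrelevance. Qed.

Lemma set_ext {E : Type} (X Y : E -> Prop) : (forall x, X x <-> Y x) -> X = Y.
Proof. intros H; apply functional_extensionality; intros x; apply propositional_extensionality; auto. Qed.

Definition mkRp (r : R) (h : 0 <= r) : Rp := exist (fun x => ER_le (Fin 0) x) (Fin r) h.
Definition RpInf : Rp := exist (fun x => ER_le (Fin 0) x) PInf I.

Lemma mkRp_fin r h : Rp_finite (mkRp r h).
Proof. exists r; reflexivity. Qed.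

Lemma le_refl x : Rp_le x x.
Proof. unfold Rp_le; destruct x as [[a|] h]; simpl; [lra|exact I]. Qed.

Lemma le_trans x y z : Rp_le x y -> Rp_le y z -> Rp_le x z.
Proof. unfold Rp_le; destruct x as [[a|] ?], y as [[b|] ?], z as [[c|] ?]; simpl; intros; try lra; tauto. Qed.

Lemma le_antisym x y : Rp_le x y -> Rp_le y x -> x = y.
Proof. intros H1 H2; apply Rp_eq; revert H1 H2; unfold Rp_le; destruct x as [[a|] ?], y as [[b|] ?]; simpl; intros; try tauto; f_equal; lra. Qed.

Lemma le_total x y : Rp_le x y \/ Rp_lt y x.
Proof. unfold Rp_le, Rp_lt; destruct x as [[a|] ?], y as [[b|] ?]; simpl; auto. destruct (Rle_or_lt a b); auto. Qed.

Lemma le0 x : Rp_le Rp0 x.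
Proof. unfold Rp_le; destruct x as [[a|] h]; simpl in *; auto. Qed.

Lemma lt_not_le x y : Rp_lt x y -> ~ Rp_le y x.
Proof. unfold Rp_le, Rp_lt; destruct x as [[a|] ?], y as [[b|] ?]; simpl; intros; try tauto; lra. Qed.

Lemma not_le_lt x y : ~ Rp_le y x -> Rp_lt x y.
Proof. intros H; destruct (le_total y x); tauto. Qed.

Lemma lt_le x y : Rp_lt x y -> Rp_le x y.
Proof. unfold Rp_le, Rp_lt; destruct x as [[a|] ?], y as [[b|] ?]; simpl; intros; try tauto; lra. Qed.

Lemma lt_le_trans x y z : Rp_lt x y -> Rp_le y z -> Rp_lt x z.
Proof. unfold Rp_le, Rp_lt; destruct x as [[a|] ?], y as [[b|] ?], z as [[c|] ?]; simpl; intros; try lra; tauto. Qed.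

Lemma B_ext {E} (B : (E -> Prop) -> Prop) X Y : B X -> (forall x, X x <-> Y x) -> B Y.
Proof. intros H e; rewrite <- (set_ext X Y e); auto. Qed.

Lemma B_compl {E} (B : (E -> Prop) -> Prop) X : sigma_algebra B -> B X -> B (fun x => ~ X x).
Proof. intros (_ & H & _); auto. Qed.

Lemma B_empty {E} (B : (E -> Prop) -> Prop) : sigma_algebra B -> B (fun _ => False).
Proof. intros HB. apply B_ext with (fun x : E => ~ True). apply B_compl; auto; apply HB. tauto. Qed.

Lemma B_union2 {E} (B : (E -> Prop) -> Prop) X Y : sigma_algebra B -> B X -> B Y -> B (fun x => X x \/ Y x).
Proof.
  intros HB HX HY. destruct HB as (_ & _ & Hu).
  apply B_ext with (fun x => exists n, (match n with O => X | _ => Y end) x).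
  apply Hu; intros [|n]; auto.
  intros x; split. intros [[|n] H]; auto. intros [H|H]; [exists O|exists 1%nat]; auto.
Qed.

Lemma B_inter2 {E} (B : (E -> Prop) -> Prop) X Y : sigma_algebra B -> B X -> B Y -> B (fun x => X x /\ Y x).
Proof.
  intros HB HX HY. apply B_ext with (fun x => ~ (~ X x \/ ~ Y x)).
  apply B_compl; auto; apply B_union2; auto; apply B_compl; auto.
  intros x; tauto.
Qed.

Lemma B_cinter {E} (B : (E -> Prop) -> Prop) (A : nat -> E -> Prop) : sigma_algebra B -> (forall n, B (A n)) -> B (fun x => forall n, A n x).
Proof.
  intros HB HA. apply B_ext with (fun x => ~ exists n, ~ A n x).
  apply B_compl; auto. apply HB. intros n; apply B_compl; auto.
  intros x; split. intros H n; apply NNPP; intros Hn; apply H; eauto.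
  intros H [n Hn]; auto.
Qed.

Lemma countable_bool : countable bool.
Proof. exists (fun b : bool => if b then O else 1%nat). intros [|] [|]; simpl; congruence. Qed.

Lemma countable_nat : countable nat.
Proof. exists (fun n => n); auto. Qed.

Lemma mu_mono {E} (B : (E -> Prop) -> Prop) mu X Y : sigma_maxitive B mu -> B X -> B Y ->
  (forall x, X x -> Y x) -> Rp_le (mu X) (mu Y).
Proof.
  intros [_ Hm] HX HY Hs.
  destruct (Hm bool (fun b : bool => if b then X else Y) countable_bool) as [H1 _].
  intros [|]; auto.
  replace Y with (fun x => exists j : bool, (if j then X else Y) x).
  apply H1; exists true; reflexivity.
  apply set_ext; intros x; split. intros [[|] H]; auto. intros H; exists false; auto.
Qed.

Lemma mu_split {E} (B : (E -> Prop) -> Prop) mu X N : sigma_maxitive B mu -> sigma_algebra B -> B X -> B N ->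
  mu (fun x => X x /\ N x) = Rp0 -> Rp_le (mu X) (mu (fun x => X x /\ ~ N x)).
Proof.
  intros [_ Hm] HB HX HN H0.
  destruct (Hm bool (fun b : bool => if b then (fun x => X x /\ N x) else (fun x => X x /\ ~ N x)) countable_bool) as [_ H2].
  intros [|]. apply B_inter2; auto. apply B_inter2; auto. apply B_compl; auto.
  assert (Heq : (fun x => exists j : bool, (if j then (fun x => X x /\ N x) else (fun x => X x /\ ~ N x)) x) = X).
  apply set_ext; intros x; split. intros [[|] H]; tauto. intros H; destruct (classic (N x)); [exists true|exists false]; auto.
  rewrite <- Heq at 1.
  apply H2. intros y [[|] ->]. rewrite H0; apply le0. apply le_refl.
Qed.

Lemma mu_cnull {E} (B : (E -> Prop) -> Prop) mu (A : nat -> E -> Prop) : sigma_maxitive B mu ->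
  (forall n, B (A n)) -> (forall n, mu (A n) = Rp0) -> mu (fun x => exists n, A n x) = Rp0.
Proof.
  intros [_ Hm] HA H0. destruct (Hm nat A countable_nat HA) as [_ H2].
  apply le_antisym; [|apply le0]. apply H2. intros y [j ->]. rewrite H0; apply le_refl.
Qed.

Lemma mu_null_mono {E} (B : (E -> Prop) -> Prop) mu X Y : sigma_maxitive B mu -> B X -> B Y ->
  (forall x, X x -> Y x) -> mu Y = Rp0 -> mu X = Rp0.
Proof. intros Hm HX HY Hs H0. apply le_antisym; [|apply le0]. rewrite <- H0; eapply mu_mono; eauto. Qed.

Lemma F0 odot : (forall t, odot t Rp0 = Rp0) -> odot_finite odot Rp0.
Proof.
  intros H0. split. intros y _; apply le0.
  intros z Hz. assert (h1 : 0 <= 1) by lra.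
  specialize (Hz (odot (mkRp 1 h1) Rp0)). rewrite H0 in Hz. apply Hz.
  exists (mkRp 1 h1); split; [unfold Rp_lt; simpl; lra | rewrite H0; reflexivity].
Qed.

Lemma F_down odot u v : (forall s t t', Rp_le t t' -> Rp_le (odot s t) (odot s t')) ->
  Rp_le u v -> odot_finite odot v -> odot_finite odot u.
Proof.
  intros Hmr Huv [_ Hv]. split. intros y _; apply le0.
  intros z Hz. apply Hv. intros y [s [hs ->]]. eapply le_trans. apply Hz. exists s; split; eauto. apply Hmr; auto.
Qed.

Lemma F_wit odot a : ~ odot_finite odot a ->
  exists z, (forall s, Rp_lt Rp0 s -> Rp_le z (odot s a)) /\ ~ Rp_le z Rp0.
Proof.
  intros Ha. apply NNPP; intros Hn; apply Ha; split. intros y _; apply le0.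
  intros z Hz. apply NNPP; intros Hz'. apply Hn; exists z; split; auto.
  intros s hs; apply Hz; eauto.
Qed.

Lemma F_mult odot a u :
  (forall a b c, odot (odot a b) c = odot a (odot b c)) ->
  (forall s s' t, Rp_le s s' -> Rp_le (odot s t) (odot s' t)) ->
  (forall s t, odot s t = Rp0 -> s = Rp0 \/ t = Rp0) ->
  ~ odot_finite odot a -> u <> Rp0 -> ~ odot_finite odot (odot a u).
Proof.
  intros Has Hml Hzd Ha Hu HF. destruct (F_wit odot a Ha) as [z [Hz Hz0]].
  destruct HF as [_ Hinf].
  assert (H : Rp_le (odot z u) Rp0).
  { apply Hinf. intros y [s [hs ->]]. rewrite <- Has. apply Hml. auto. }
  assert (H' : odot z u = Rp0) by (apply le_antisym; auto; apply le0).
  destruct (Hzd _ _ H') as [->| ->]. apply Hz0, le_refl. auto.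
Qed.

Lemma F_kill odot r u w :
  (forall a b c, odot (odot a b) c = odot a (odot b c)) ->
  (forall s s' t, Rp_le s s' -> Rp_le (odot s t) (odot s' t)) ->
  (forall s t t', Rp_le t t' -> Rp_le (odot s t) (odot s t')) ->
  (forall s t, odot s t = Rp0 -> s = Rp0 \/ t = Rp0) ->
  ~ odot_finite odot r -> Rp_le (odot r u) w -> odot_finite odot w -> u = Rp0.
Proof.
  intros Has Hml Hmr Hzd Hr Hle Hw. apply NNPP; intros Hu.
  apply (F_mult odot r u Has Hml Hzd Hr Hu). eapply F_down; eauto.
Qed.

Lemma dens_bound {E} B odot (nu tau : (E -> Prop) -> Rp) c A r :
  is_density B odot nu tau c -> B A -> Rp_finite r ->
  Rp_le (odot r (tau (fun x => A x /\ Rp_lt r (c x)))) (nu A).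
Proof. intros [_ Hs] HA Hr. apply (proj1 (Hs A HA)). exists r; split; auto. Qed.

Lemma null_above {E} (B : (E -> Prop) -> Prop) odot nu tau c (al : R) (hal : 0 <= al) A' :
  pseudo_mult odot -> sigma_algebra B -> sigma_maxitive B tau -> is_density B odot nu tau c ->
  (forall r (x : Rp), proj1_sig x = Fin r -> al < r -> ~ odot_finite odot x) ->
  B A' -> odot_finite odot (nu A') ->
  tau (fun x => A' x /\ Rp_lt (mkRp al hal) (c x)) = Rp0.
Proof.
  intros Hpm HB Ht Hd Habove HA' HF.
  destruct Hpm as (Has & _ & _ & Hml & Hmr & _ & Hzd & _).
  assert (hr : forall n, 0 <= al + / INR (S n)).
  { intros n. assert (0 < INR (S n)) by (apply lt_0_INR; lia).
    assert (0 < / INR (S n)) by (apply Rinv_0_lt_compat; auto). lra. }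
  pose (P := fun n x => A' x /\ Rp_lt (mkRp _ (hr n)) (c x)).
  assert (HP : forall n, B (P n)).
  { intros n; apply B_inter2; auto. apply (proj1 Hd). apply mkRp_fin. }
  replace (fun x => A' x /\ Rp_lt (mkRp al hal) (c x)) with (fun x => exists n, P n x).
  apply (mu_cnull B tau P Ht HP). intros n.
  apply (F_kill odot (mkRp _ (hr n)) _ (nu A') Has Hml Hmr Hzd); [|apply (dens_bound B odot nu tau c A'); auto; apply mkRp_fin|auto].
  apply (Habove (al + / INR (S n))). reflexivity.
  assert (0 < INR (S n)) by (apply lt_0_INR; lia).
  assert (0 < / INR (S n)) by (apply Rinv_0_lt_compat; auto). lra.
  apply set_ext; intros x; unfold P; split.
  - intros [n [H1 H2]]; split; auto. revert H2; unfold Rp_lt; destruct (c x) as [[v|] hv]; cbn [proj1_sig mkRp ER_lt]; auto; intros H2.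
    assert (0 < INR (S n)) by (apply lt_0_INR; lia).
    assert (0 < / INR (S n)) by (apply Rinv_0_lt_compat; auto). lra.
  - intros [H1 H2]; revert H2; unfold Rp_lt; destruct (c x) as [[v|] hv]; cbn [proj1_sig mkRp ER_lt]; intros H2.
    + destruct (archimed_cor1 (v - al)) as [N [HN1 HN2]]; [lra|].
      exists (pred N); split; auto. cbn [proj1_sig mkRp ER_lt]. replace (S (pred N)) with N by lia. lra.
    + exists O; auto.
Qed.

Lemma lemC {E} (B : (E -> Prop) -> Prop) odot nu tau c (a : Rp) D A' :
  pseudo_mult odot -> sigma_algebra B -> sigma_maxitive B tau -> is_density B odot nu tau c ->
  B D -> B A' -> (forall x, D x -> A' x) -> odot_finite odot (nu A') ->
  ~ odot_finite odot a ->
  (forall x, D x -> forall r, Rp_finite r -> Rp_lt r a -> Rp_lt r (c x)) ->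
  tau D = Rp0.
Proof.
  intros Hpm HB Ht Hd HD HA' Hsub HF Ha Hr.
  destruct Hpm as (Has & _ & Hc1 & Hml & Hmr & _ & Hzd & H0).
  apply NNPP; intro Hu.
  assert (Hbd : forall r, Rp_finite r -> Rp_lt r a -> Rp_le (odot r (tau D)) (nu A')).
  { intros r hr hra. eapply le_trans; [|apply (dens_bound B odot nu tau c A' r); auto].
    apply Hmr. apply (mu_mono B); auto. apply B_inter2; auto. apply (proj1 Hd); auto. }
  assert (Hinf : ~ odot_finite odot (odot a (tau D))) by (apply F_mult; auto).
  assert (Hlt : Rp_lt (nu A') (odot a (tau D))).
  { apply not_le_lt; intro Hle; apply Hinf; eapply F_down; eauto. }
  assert (apos : Rp_lt Rp0 a).
  { apply not_le_lt; intro Hle. apply Ha. replace a with Rp0. apply F0; intro; apply H0.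
    apply le_antisym; auto; apply le0. }
  assert (Hnb : nbhd (odot a (tau D)) (fun y => Rp_lt (nu A') y)).
  { revert Hlt. unfold nbhd, Rp_lt. destruct (odot a (tau D)) as [[v|] hv]; simpl;
    destruct (nu A') as [[w|] hw]; simpl; intros Hlt; try tauto.
    - exists (v - w); split; [lra|]. intros [[y|] hy]; simpl; [|tauto].
      intros Hy; apply Rabs_def2 in Hy; lra.
    - exists w. intros [[y|] hy]; simpl; auto. }
  specialize (Hc1 (tau D) a apos _ Hnb). unfold nbhd in Hc1.
  unfold Rp_lt in apos. destruct (proj1_sig a) as [al|] eqn:Ea.
  - destruct Hc1 as [eps [Heps Hq]]. simpl in apos.
    assert (hr : 0 <= Rmax 0 (al - eps / 2)) by apply Rmax_l.
    assert (Hrl : Rmax 0 (al - eps / 2) < al).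
    { unfold Rmax; destruct (Rle_dec 0 (al - eps / 2)); lra. }
    specialize (Hq (mkRp _ hr)). simpl in Hq.
    assert (Hq' : Rp_lt (nu A') (odot (mkRp _ hr) (tau D))).
    { apply Hq. unfold Rmax; destruct (Rle_dec 0 (al - eps / 2)); apply Rabs_def1; lra. }
    apply (lt_not_le _ _ Hq'). apply Hbd. apply mkRp_fin.
    unfold Rp_lt; rewrite Ea; simpl; auto.
  - destruct Hc1 as [M Hq].
    assert (hr : 0 <= Rabs M + 1) by (pose proof (Rabs_pos M); lra).
    assert (Hq' : Rp_lt (nu A') (odot (mkRp _ hr) (tau D))).
    { apply Hq. simpl. pose proof (Rle_abs M); lra. }
    apply (lt_not_le _ _ Hq'). apply Hbd. apply mkRp_fin.
    unfold Rp_lt; rewrite Ea; simpl; auto.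
Qed.

Lemma N_exists {E} (B : (E -> Prop) -> Prop) odot nu tau c :
  pseudo_mult odot -> sigma_algebra B -> sigma_maxitive B tau -> is_density B odot nu tau c ->
  exists N : E -> Prop, B N /\ (forall x, N x <-> ~ odot_finite odot (c x)) /\
    (forall A', B A' -> odot_finite odot (nu A') -> tau (fun x => A' x /\ N x) = Rp0).
Proof.
  intros Hpm HB Ht Hd.
  pose proof Hpm as (Has & _ & _ & Hml & Hmr & _ & Hzd & H0).
  assert (HF0 : odot_finite odot Rp0) by (apply F0; intro; apply H0).
  assert (Hmeas : forall r, Rp_finite r -> B (fun x => Rp_lt r (c x))) by apply Hd.
  pose (P := fun r => exists x : Rp, proj1_sig x = Fin r /\ odot_finite odot x).
  destruct (classic (bound P)) as [Hb | Hnb].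
  - destruct (completeness P Hb) as [al [Hub Hlub]].
    { exists 0; exists Rp0; split; auto. }
    assert (hal : 0 <= al) by (apply Hub; exists Rp0; split; auto).
    assert (Hbelow : forall r (x : Rp), proj1_sig x = Fin r -> r < al -> odot_finite odot x).
    { intros r x Hx Hr. destruct (classic (is_upper_bound P r)) as [Hu|Hu].
      - specialize (Hlub r Hu); lra.
      - apply NNPP; intro Hn; apply Hu. intros y [x' [Hx' Hf]].
        destruct (Rle_or_lt y r) as [|Hlt]; auto. exfalso; apply Hn.
        eapply F_down; eauto. unfold Rp_le; rewrite Hx, Hx'; simpl; lra. }
    assert (Habove : forall r (x : Rp), proj1_sig x = Fin r -> al < r -> ~ odot_finite odot x).
    { intros r x Hx Hr Hf. assert (r <= al) by (apply Hub; exists x; auto). lra. }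
    assert (Hinf : ~ odot_finite odot RpInf).
    { intro Hf. assert (h1 : 0 <= al + 1) by lra. apply (Habove (al + 1) (mkRp _ h1)); auto. lra.
      eapply F_down; eauto. unfold Rp_le; simpl; auto. }
    destruct (classic (odot_finite odot (mkRp al hal))) as [Ha | Ha].
    + exists (fun x => Rp_lt (mkRp al hal) (c x)). split; [apply Hmeas, mkRp_fin|split].
      * intros x. unfold Rp_lt. destruct (proj1_sig (c x)) as [v|] eqn:Ecx; cbn [proj1_sig mkRp ER_lt].
        split. intros Hv. apply (Habove v); auto.
        intros Hn. destruct (Rle_or_lt v al) as [Hle|]; auto. exfalso; apply Hn.
        eapply F_down; eauto. unfold Rp_le; rewrite Ecx; simpl; auto.
        split; auto. intros _. rewrite (Rp_eq (c x) RpInf Ecx); auto.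
      * intros A' HA' HF. eapply null_above; eauto.
    + assert (apos : 0 < al).
      { destruct (Rle_lt_or_eq_dec 0 al hal) as [|Hz]; auto. exfalso; apply Ha.
        rewrite (Rp_eq (mkRp al hal) Rp0); auto. simpl; rewrite Hz; reflexivity. }
      assert (HNm : B (fun x => Rp_le (mkRp al hal) (c x))).
      { assert (hr : forall n, 0 <= Rmax 0 (al - / INR (S n))) by (intros; apply Rmax_l).
        apply B_ext with (fun x => forall n, Rp_lt (mkRp _ (hr n)) (c x)).
        apply B_cinter; auto. intros n; apply Hmeas, mkRp_fin.
        intros x. unfold Rp_lt, Rp_le. destruct (proj1_sig (c x)) as [v|]; cbn [proj1_sig mkRp ER_lt ER_le].
        split.
        -- intros H. apply Rnot_lt_le; intro Hv.
           destruct (archimed_cor1 (al - v)) as [N [HN1 HN2]]; [lra|].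
           specialize (H (pred N)). replace (S (pred N)) with N in H by lia.
           revert H; unfold Rmax; destruct (Rle_dec 0 (al - / INR N)); lra.
        -- intros H n. assert (0 < INR (S n)) by (apply lt_0_INR; lia).
           assert (0 < / INR (S n)) by (apply Rinv_0_lt_compat; auto).
           unfold Rmax; destruct (Rle_dec 0 (al - / INR (S n))); lra.
        -- split; auto. }
      exists (fun x => Rp_le (mkRp al hal) (c x)). split; [auto|split].
      * intros x. unfold Rp_le. destruct (proj1_sig (c x)) as [v|] eqn:Ecx; cbn [proj1_sig mkRp ER_le].
        split. intros Hv. destruct Hv as [Hv|Hv]. apply (Habove v); auto.
        subst v. rewrite (Rp_eq (c x) (mkRp al hal) Ecx); auto.
        intros Hn. apply Rnot_lt_le; intro Hlt. apply Hn. apply (Hbelow v); auto.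
        split; auto. intros _. rewrite (Rp_eq (c x) RpInf Ecx); auto.
      * intros A' HA' HF.
        pose (X := fun x => A' x /\ Rp_le (mkRp al hal) (c x)).
        assert (HX : B X) by (apply B_inter2; auto).
        apply le_antisym; [|apply le0].
        eapply le_trans. apply (mu_split B tau X (fun x => Rp_lt (mkRp al hal) (c x)) Ht HB HX (Hmeas _ (mkRp_fin _ _))).
        { apply (mu_null_mono B tau _ (fun x => A' x /\ Rp_lt (mkRp al hal) (c x))); auto.
          apply B_inter2; auto. apply Hmeas, mkRp_fin. apply B_inter2; auto. apply Hmeas, mkRp_fin.
          unfold X; tauto. eapply null_above; eauto. }
        erewrite (lemC B odot nu tau c (mkRp al hal) _ A'); eauto. apply le_refl.
        apply B_inter2; auto. apply B_compl; auto. apply Hmeas, mkRp_fin.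
        unfold X; tauto.
        intros x [[_ H1] _] r _ Hr. eapply lt_le_trans; eauto.
  - assert (Hall : forall r (x : Rp), proj1_sig x = Fin r -> odot_finite odot x).
    { intros r x Hx. apply NNPP; intro Hn. apply Hnb. exists r. intros y [x' [Hx' Hf]].
      apply Rnot_lt_le; intro Hlt. apply Hn. eapply F_down; eauto.
      unfold Rp_le; rewrite Hx, Hx'; simpl; lra. }
    destruct (classic (odot_finite odot RpInf)) as [Hi|Hi].
    + exists (fun _ => False). split; [apply B_empty; auto|split].
      * intros x; split; [tauto|]. intros Hn; apply Hn.
        destruct (proj1_sig (c x)) as [v|] eqn:Ecx. eapply Hall; eauto.
        rewrite (Rp_eq (c x) RpInf Ecx); auto.
      * intros A' _ _. replace (fun x => A' x /\ False) with (fun _ : E => False).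
        apply Ht. apply set_ext; tauto.
    + assert (HNm : B (fun x => proj1_sig (c x) = PInf)).
      { apply B_ext with (fun x => forall n, Rp_lt (mkRp _ (pos_INR n)) (c x)).
        apply B_cinter; auto. intros n; apply Hmeas, mkRp_fin.
        intros x. unfold Rp_lt. destruct (proj1_sig (c x)) as [v|]; cbn [proj1_sig mkRp ER_lt].
        split; [|discriminate]. intros H. destruct (INR_unbounded v) as [n Hn].
        specialize (H n); lra. split; auto. }
      exists (fun x => proj1_sig (c x) = PInf). split; [auto|split].
      * intros x. destruct (proj1_sig (c x)) as [v|] eqn:Ecx.
        split; [discriminate|]. intros Hn; exfalso; apply Hn; eapply Hall; eauto.
        split; auto. intros _. rewrite (Rp_eq (c x) RpInf Ecx); auto.
      * intros A' HA' HF. apply (lemC B odot nu tau c RpInf _ A'); auto.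
        apply B_inter2; auto. tauto.
        intros x [_ Hx] r [rr Hr] _. unfold Rp_lt; rewrite Hx, Hr; simpl; auto.
Qed.

Theorem mainTheorem4 (odot : Rp -> Rp -> Rp) (E : Type) (e0 : E)
  (B : (E -> Prop) -> Prop) (nu tau : (E -> Prop) -> Rp) (c : E -> Rp) :
  pseudo_mult odot ->
  sigma_algebra B ->
  sigma_maxitive B nu ->
  sigma_maxitive B tau ->
  semi_odot_finite B odot nu ->
  is_density B odot nu tau c ->
  exists c' : E -> Rp, is_density B odot nu tau c' /\
    forall x, odot_finite odot (c' x).
Proof.
  intros Hpm HB Hnu Ht Hsemi Hd.
  pose proof Hpm as (Has & _ & _ & Hml & Hmr & _ & Hzd & H0).
  assert (HF0 : odot_finite odot Rp0) by (apply F0; intro; apply H0).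
  assert (Hmeas : forall r, Rp_finite r -> B (fun x => Rp_lt r (c x))) by apply Hd.
  destruct (N_exists B odot nu tau c Hpm HB Ht Hd) as [N [HNm [HNc HNn]]].
  pose (c' := fun x => match excluded_middle_informative (odot_finite odot (c x)) with
                       | left _ => c x | right _ => Rp0 end).
  assert (Hc'm : measurable B c').
  { intros t Ht'. apply B_ext with (fun x => Rp_lt t (c x) /\ ~ N x).
    apply B_inter2; auto. apply B_compl; auto.
    intros x; unfold c'; destruct (excluded_middle_informative (odot_finite odot (c x))) as [h|h].
    - rewrite HNc; tauto.
    - rewrite HNc. split; [tauto|]. intros Hl; exfalso; eapply lt_not_le; eauto; apply le0. }
  assert (Hsub : forall t x, Rp_lt t (c' x) -> Rp_lt t (c x) /\ ~ N x).
  { intros t x; unfold c'; destruct (excluded_middle_informative (odot_finite odot (c x))) as [h|h].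
    - rewrite HNc; tauto.
    - intros Hl; exfalso; eapply lt_not_le; eauto; apply le0. }
  assert (Hsub2 : forall t x, Rp_lt t (c x) -> ~ N x -> Rp_lt t (c' x)).
  { intros t x; unfold c'; destruct (excluded_middle_informative (odot_finite odot (c x))) as [h|h].
    - auto.
    - rewrite HNc; tauto. }
  exists c'. split; [split; auto|].
  - intros A HA. split.
    + intros y [t [Htf ->]]. eapply le_trans; [|apply (dens_bound B odot nu tau c A t); auto].
      apply Hmr. apply (mu_mono B); auto. apply B_inter2; auto. apply B_inter2; auto.
      intros x [H1 H2]; split; auto; apply (Hsub t x); auto.
    + intros z Hz. destruct (Hsemi A HA) as [_ Hl]. apply Hl.
      intros y [A' [HA' [HsA [HF ->]]]]. destruct (proj2 Hd A' HA') as [_ Hl']. apply Hl'.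
      intros y [t [Htf ->]].
      eapply le_trans; [|apply Hz; exists t; split; eauto].
      apply Hmr.
      assert (HX : B (fun x => A' x /\ Rp_lt t (c x))) by (apply B_inter2; auto).
      eapply le_trans. apply (mu_split B tau _ N Ht HB HX HNm).
      { apply (mu_null_mono B tau _ (fun x => A' x /\ N x)); auto.
        apply B_inter2; auto. apply B_inter2; auto. tauto. }
      apply (mu_mono B); auto. apply B_inter2; auto. apply B_compl; auto.
      apply B_inter2; auto.
      intros x [[H1 H2] H3]; split; auto.
  - intros x; unfold c'; destruct (excluded_middle_informative (odot_finite odot (c x))); auto.
Qed.
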